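(* Assume $\cos(\varphi_{GU})>0$. Then $\mathcal{N}(\mathcal{G})=\mathcal{N}\big((\mathcal{U}^*\mathcal{U})^{\dagger/2}\mathcal{U}^*\mathcal{G}\big)$ and $$\sqrt{C}\cos(\varphi_{GU})\|c\|\le\|(\mathcal{U}^*\mathcal{U})^{\dagger/2}\mathcal{U}^*\mathcal{G}c\|\le\sqrt{D}\|c\|\quad\text{for all }c\in\mathcal{N}(\mathcal{G})^\perp.$$
   Context: $H$ is a separable Hilbert space. $\{u_j\}_{j\in\mathbb{N}}$ is a frame sequence with $U:=\overline{\operatorname{span}}\{u_j\}$ and bounds $A,B>0$ (i.e., $A\|f\|^2\le\sum_j|\langle f,u_j\rangle|^2\le B\|f\|^2$ for $f\in U$); $\{g_k\}_{k\in\mathbb{N}}$ is a frame sequence with $G:=\overline{\operatorname{span}}\{g_k\}$ and frame bounds $C,D>0$. $\mathcal{U},\mathcal{G}:\ell^2(\mathbb{N})\to H$ are the synthesis operators ($\mathcal{U}c=\sum c_ju_j$), $\mathcal{U}^*$ the analysis operator. $(\mathcal{U}^*\mathcal{U})^{\dagger/2}$ is the positive square root of the Moore–Penrose pseudoinverse of $\mathcal{U}^*\mathcal{U}$. $\cos(\varphi_{GU}):=\inf_{g\in G,\|g\|=1}\|P_Ug\|$, $P_U$ the orthogonal projection onto $U$. *)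

(* Defs.v *)
From Stdlib Require Import Reals ClassicalEpsilon.
Open Scope R_scope.

Record Cx := mkC { re : R; im : R }.
Definition C0 : Cx := mkC 0 0.
Definition C1 : Cx := mkC 1 0.
Definition Cadd (a b : Cx) : Cx := mkC (re a + re b) (im a + im b).
Definition Cmul (a b : Cx) : Cx :=
  mkC (re a * re b - im a * im b) (re a * im b + im a * re b).
Definition Cconj (a : Cx) : Cx := mkC (re a) (- im a).
Definition Cmod2 (a : Cx) : R := re a * re a + im a * im a.

Record HSpace := {
  hcar :> Type;
  hz : hcar;
  hadd : hcar -> hcar -> hcar;
  hopp : hcar -> hcar;
  hscal : Cx -> hcar -> hcar;
  hinner : hcar -> hcar -> Cx;
  hadd_assoc : forall x y z, hadd x (hadd y z) = hadd (hadd x y) z;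
  hadd_comm : forall x y, hadd x y = hadd y x;
  hadd_0 : forall x, hadd x hz = x;
  hadd_opp : forall x, hadd x (hopp x) = hz;
  hscal_1 : forall x, hscal C1 x = x;
  hscal_assoc : forall a b x, hscal a (hscal b x) = hscal (Cmul a b) x;
  hscal_distr_v : forall a x y, hscal a (hadd x y) = hadd (hscal a x) (hscal a y);
  hscal_distr_s : forall a b x, hscal (Cadd a b) x = hadd (hscal a x) (hscal b x);
  inner_add_l : forall x y z, hinner (hadd x y) z = Cadd (hinner x z) (hinner y z);
  inner_scal_l : forall a x y, hinner (hscal a x) y = Cmul a (hinner x y);
  inner_conj : forall x y, hinner y x = Cconj (hinner x y);
  inner_pos : forall x, 0 <= re (hinner x x);
  inner_def : forall x, hinner x x = C0 -> x = hz
}.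

Arguments hz {h}.
Arguments hadd {h}.
Arguments hopp {h}.
Arguments hscal {h}.
Arguments hinner {h}.

Section HS.
Context {H : HSpace}.

Definition hsub (x y : H) : H := hadd x (hopp y).
Definition hnorm (x : H) : R := sqrt (re (hinner x x)).

Fixpoint hpsum (f : nat -> H) (n : nat) : H :=
  match n with O => hz | S m => hadd (hpsum f m) (f m) end.

Definition has_sum (f : nat -> H) (x : H) : Prop :=
  forall eps, 0 < eps -> exists N, forall n, (N <= n)%nat ->
    hnorm (hsub (hpsum f n) x) < eps.

Definition complete : Prop :=
  forall s : nat -> H,
    (forall eps, 0 < eps -> exists N, forall n m, (N <= n)%nat -> (N <= m)%nat ->
        hnorm (hsub (s n) (s m)) < eps) ->
    exists l, forall eps, 0 < eps -> exists N, forall n, (N <= n)%nat ->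
        hnorm (hsub (s n) l) < eps.

Definition separable : Prop :=
  exists d : nat -> H, forall x eps, 0 < eps -> exists n, hnorm (hsub x (d n)) < eps.

Definition in_span (u : nat -> H) (f : H) : Prop :=
  exists (n : nat) (a : nat -> Cx), f = hpsum (fun j => hscal (a j) (u j)) n.
Definition in_cspan (u : nat -> H) (f : H) : Prop :=
  forall eps, 0 < eps -> exists y, in_span u y /\ hnorm (hsub f y) < eps.

Definition frame_seq (u : nat -> H) (A B : R) : Prop :=
  0 < A /\ 0 < B /\
  forall f, in_cspan u f ->
    exists s, infinite_sum (fun j => Cmod2 (hinner f (u j))) s /\
              A * (hnorm f) ^ 2 <= s <= B * (hnorm f) ^ 2.

Definition is_orth_proj (u : nat -> H) (g p : H) : Prop :=
  in_cspan u p /\ forall y, in_cspan u y -> hinner (hsub g p) y = C0.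

Definition is_glb (S : R -> Prop) (c : R) : Prop :=
  (forall r, S r -> c <= r) /\ (forall c', (forall r, S r -> c' <= r) -> c' <= c).

(* c = cos(phi_{GU}) = inf_{g in G, ||g|| = 1} ||P_U g||, G = cspan g, U = cspan u *)
Definition cos_angle (g u : nat -> H) (c : R) : Prop :=
  is_glb (fun r => exists x p, in_cspan g x /\ hnorm x = 1 /\
                               is_orth_proj u x p /\ r = hnorm p) c.

Definition series_sum (a : nat -> R) : R :=
  epsilon (inhabits 0) (fun s => infinite_sum a s).

Definition is_l2 (c : nat -> Cx) : Prop :=
  exists s, infinite_sum (fun n => Cmod2 (c n)) s.
Definition l2norm (c : nat -> Cx) : R := sqrt (series_sum (fun n => Cmod2 (c n))).
Definition l2inner (c d : nat -> Cx) : Cx :=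
  mkC (series_sum (fun n => re (Cmul (c n) (Cconj (d n)))))
      (series_sum (fun n => im (Cmul (c n) (Cconj (d n))))).
Definition seq_eq (c d : nat -> Cx) : Prop := forall n, c n = d n.
Definition zero_seq : nat -> Cx := fun _ => C0.

Definition synth (u : nat -> H) (c : nat -> Cx) : H :=
  epsilon (inhabits hz) (fun x => has_sum (fun k => hscal (c k) (u k)) x).
Definition analysis (u : nat -> H) (f : H) : nat -> Cx := fun j => hinner f (u j).

Definition gram (u : nat -> H) : (nat -> Cx) -> (nat -> Cx) :=
  fun c => analysis u (synth u c).

End HS.

Definition l2op := (nat -> Cx) -> (nat -> Cx).

Definition is_bounded_op (M : l2op) : Prop :=
  (forall x, is_l2 x -> is_l2 (M x)) /\
  (forall a x y, is_l2 x -> is_l2 y ->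
     seq_eq (M (fun n => Cadd (Cmul a (x n)) (y n)))
            (fun n => Cadd (Cmul a (M x n)) (M y n))) /\
  (exists K, forall x, is_l2 x -> l2norm (M x) <= K * l2norm x).

Definition is_MP_pinv (M P : l2op) : Prop :=
  is_bounded_op P /\
  (forall x, is_l2 x -> seq_eq (M (P (M x))) (M x)) /\
  (forall x, is_l2 x -> seq_eq (P (M (P x))) (P x)) /\
  (forall x y, is_l2 x -> is_l2 y -> l2inner (M (P x)) y = l2inner x (M (P y))) /\
  (forall x y, is_l2 x -> is_l2 y -> l2inner (P (M x)) y = l2inner x (P (M y))).

Definition is_pos_sqrt (P S : l2op) : Prop :=
  is_bounded_op S /\
  (forall x y, is_l2 x -> is_l2 y -> l2inner (S x) y = l2inner x (S y)) /\
  (forall x, is_l2 x -> 0 <= re (l2inner (S x) x)) /\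
  (forall x, is_l2 x -> seq_eq (S (S x)) (P x)).

Definition is_sqrt_pinv (M S : l2op) : Prop :=
  exists P, is_MP_pinv M P /\ is_pos_sqrt P S.

(* Main.v *)
Require Import Defs.
From Stdlib Require Import Reals.
Open Scope R_scope.
From Stdlib Require Import Lra Lia Psatz ClassicalEpsilon FunctionalExtensionality Classical.

Fixpoint rs (a : nat -> R) (n : nat) : R :=
  match n with O => 0 | S m => rs a m + a m end.

Lemma rs_sumf a n : sum_f_R0 a n = rs a (S n).
Proof. induction n; simpl in *; [lra|rewrite IHn; simpl; lra]. Qed.

Definition Lim (u : nat -> R) (l : R) : Prop :=
  forall eps, 0 < eps -> exists N, forall n, (N <= n)%nat -> Rabs (u n - l) < eps.

Definition Ser (a : nat -> R) (l : R) := Lim (rs a) l.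

Lemma infsum_Ser a l : infinite_sum a l <-> Ser a l.
Proof.
  split; intros H e He; destruct (H e He) as [N HN].
  - exists (S N); intros n Hn. destruct n; [lia|]. rewrite <- rs_sumf. apply HN; lia.
  - exists N; intros n Hn. unfold Rdist. rewrite rs_sumf. apply HN; lia.
Qed.

Lemma Lim_unique u l1 l2 : Lim u l1 -> Lim u l2 -> l1 = l2.
Proof.
  intros H1 H2. destruct (Req_dec l1 l2) as [|Hne]; auto.
  set (e := Rabs (l1 - l2) / 2).
  assert (He : 0 < e) by (unfold e; assert (0 < Rabs (l1-l2)) by (apply Rabs_pos_lt; lra); lra).
  destruct (H1 e He) as [N1 HN1]; destruct (H2 e He) as [N2 HN2].
  specialize (HN1 (max N1 N2) ltac:(lia)); specialize (HN2 (max N1 N2) ltac:(lia)).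
  exfalso. assert (Rabs (l1 - l2) <= Rabs (u (max N1 N2) - l1) + Rabs (u (max N1 N2) - l2)).
  { replace (l1 - l2) with (-(u (max N1 N2) - l1) + (u (max N1 N2) - l2)) by ring.
    eapply Rle_trans; [apply Rabs_triang|]. rewrite Rabs_Ropp; lra. }
  unfold e in *; lra.
Qed.

Lemma Lim_ext u v l : (forall n, u n = v n) -> Lim u l -> Lim v l.
Proof. intros E H e He; destruct (H e He) as [N HN]; exists N; intros n Hn; rewrite <- E; auto. Qed.

Lemma Lim_const c : Lim (fun _ => c) c.
Proof. intros e He; exists O; intros; replace (c - c) with 0 by ring; rewrite Rabs_R0; lra. Qed.

Lemma Lim_plus u v a b : Lim u a -> Lim v b -> Lim (fun n => u n + v n) (a + b).
Proof.
  intros Hu Hv e He. destruct (Hu (e/2) ltac:(lra)) as [N1 H1]; destruct (Hv (e/2) ltac:(lra)) as [N2 H2].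
  exists (max N1 N2); intros n Hn. specialize (H1 n ltac:(lia)); specialize (H2 n ltac:(lia)).
  replace (u n + v n - (a + b)) with ((u n - a) + (v n - b)) by ring.
  eapply Rle_lt_trans; [apply Rabs_triang|lra].
Qed.

Lemma Lim_scal u a k : Lim u a -> Lim (fun n => k * u n) (k * a).
Proof.
  intros Hu e He. destruct (Hu (e / (Rabs k + 1))) as [N HN].
  { apply Rdiv_lt_0_compat; [lra|pose proof (Rabs_pos k); lra]. }
  exists N; intros n Hn. specialize (HN n Hn).
  replace (k * u n - k * a) with (k * (u n - a)) by ring. rewrite Rabs_mult.
  pose proof (Rabs_pos k). pose proof (Rabs_pos (u n - a)).
  apply Rle_lt_trans with (Rabs k * (e / (Rabs k + 1))).
  { apply Rmult_le_compat_l; lra. }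
  apply Rlt_le_trans with ((Rabs k + 1) * (e / (Rabs k + 1))).
  { apply Rmult_lt_compat_r; [apply Rdiv_lt_0_compat; lra|lra]. }
  right; field; lra.
Qed.

Lemma Lim_le u v a b : (forall n, u n <= v n) -> Lim u a -> Lim v b -> a <= b.
Proof.
  intros Hle Hu Hv. destruct (Rle_dec a b) as [|Hn]; auto. exfalso.
  set (e := (a - b)/2). assert (He: 0 < e) by (unfold e; lra).
  destruct (Hu e He) as [N1 H1]; destruct (Hv e He) as [N2 H2].
  specialize (H1 (max N1 N2) ltac:(lia)); specialize (H2 (max N1 N2) ltac:(lia)).
  specialize (Hle (max N1 N2)). apply Rabs_def2 in H1; apply Rabs_def2 in H2. unfold e in *; lra.
Qed.

Lemma Lim_le_const u a b : (forall n, u n <= b) -> Lim u a -> a <= b.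
Proof. intros H Hu; apply (Lim_le u (fun _ => b)); auto; apply Lim_const. Qed.

Lemma Lim_ge_const u a b : (forall n, b <= u n) -> Lim u a -> b <= a.
Proof. intros H Hu; apply (Lim_le (fun _ => b) u); auto; apply Lim_const. Qed.

Lemma Lim_cauchy u l : Lim u l -> forall eps, 0 < eps -> exists N, forall n m, (N <= n)%nat -> (N <= m)%nat -> Rabs (u n - u m) < eps.
Proof.
  intros H e He. destruct (H (e/2) ltac:(lra)) as [N HN]. exists N; intros n m Hn Hm.
  specialize (HN n Hn) as A; specialize (HN m Hm) as B.
  replace (u n - u m) with ((u n - l) - (u m - l)) by ring.
  eapply Rle_lt_trans; [apply Rabs_triang|]. rewrite Rabs_Ropp. lra.
Qed.

Lemma Ser_unique a l1 l2 : Ser a l1 -> Ser a l2 -> l1 = l2.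
Proof. apply Lim_unique. Qed.

Lemma rs_ext a b n : (forall k, a k = b k) -> rs a n = rs b n.
Proof. intros E; induction n; simpl; [auto|rewrite IHn, E; auto]. Qed.

Lemma Ser_ext a b l : (forall k, a k = b k) -> Ser a l -> Ser b l.
Proof. intros E; apply Lim_ext; intros; apply rs_ext; auto. Qed.

Lemma rs_plus a b n : rs (fun k => a k + b k) n = rs a n + rs b n.
Proof. induction n; simpl; [ring|rewrite IHn; ring]. Qed.
Lemma rs_scal a k n : rs (fun j => k * a j) n = k * rs a n.
Proof. induction n; simpl; [ring|rewrite IHn; ring]. Qed.
Lemma rs_le a b n : (forall k, a k <= b k) -> rs a n <= rs b n.
Proof. intros H; induction n; simpl; [lra|specialize (H n); lra]. Qed.
Lemma rs_nonneg a n : (forall k, 0 <= a k) -> 0 <= rs a n.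
Proof. intros H; induction n; simpl; [lra|specialize (H n); lra]. Qed.
Lemma rs_mono a n m : (forall k, 0 <= a k) -> (n <= m)%nat -> rs a n <= rs a m.
Proof. intros H Hnm; induction Hnm; [lra|simpl; specialize (H m); lra]. Qed.

Lemma Ser_plus a b la lb : Ser a la -> Ser b lb -> Ser (fun k => a k + b k) (la + lb).
Proof. intros Ha Hb. eapply Lim_ext; [|apply (Lim_plus _ _ _ _ Ha Hb)]. intros; simpl; rewrite rs_plus; auto. Qed.
Lemma Ser_scal a la k : Ser a la -> Ser (fun j => k * a j) (k * la).
Proof. intros Ha. eapply Lim_ext; [|apply (Lim_scal _ _ k Ha)]. intros; simpl; rewrite rs_scal; auto. Qed.
Lemma Ser_le a b la lb : (forall k, a k <= b k) -> Ser a la -> Ser b lb -> la <= lb.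
Proof. intros H Ha Hb; apply (Lim_le (rs a) (rs b)); auto; intros; apply rs_le; auto. Qed.

Lemma Lim_shift u l n : Lim u l -> Lim (fun m => u (m + n)%nat) l.
Proof. intros H e He; destruct (H e He) as [N HN]; exists N; intros; apply HN; lia. Qed.

Lemma Ser_partial_le a l n : (forall k, 0 <= a k) -> Ser a l -> rs a n <= l.
Proof.
  intros Hp Ha. apply (Lim_ge_const (fun m => rs a (m + n)%nat)); [|apply Lim_shift; auto].
  intros m; apply rs_mono; auto; lia.
Qed.

Lemma Ser_nonneg a l : (forall k, 0 <= a k) -> Ser a l -> 0 <= l.
Proof. intros Hp Ha. apply Rle_trans with (rs a 0); [simpl; lra|apply Ser_partial_le; auto]. Qed.

Lemma Ser_bounded a M : (forall k, 0 <= a k) -> (forall n, rs a n <= M) -> exists l, Ser a l /\ l <= M.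
Proof.
  intros Hp HM. destruct (growing_cv (fun n => sum_f_R0 a n)) as [l Hl].
  - intros n; simpl; specialize (Hp (S n)); lra.
  - exists M; intros x [n ->]; rewrite rs_sumf; auto.
  - exists l; split. { apply infsum_Ser; exact Hl. }
    apply (Lim_le_const (fun n => sum_f_R0 a n)); [intros; rewrite rs_sumf; auto|].
    intros e He; destruct (Hl e He) as [N HN]; exists N; intros; apply HN; lia.
Qed.

Lemma Ser_comp a b lb : (forall k, 0 <= a k <= b k) -> Ser b lb -> exists la, Ser a la /\ la <= lb.
Proof.
  intros H Hb. apply Ser_bounded; [intros k; apply H|].
  intros n; apply Rle_trans with (rs b n); [apply rs_le; intros; apply H|].
  apply Ser_partial_le; auto. intros k; specialize (H k); lra.
Qed.

Lemma Ser_abs a b lb : (forall k, Rabs (a k) <= b k) -> Ser b lb -> exists la, Ser a la.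
Proof.
  intros H Hb.
  destruct (Ser_comp (fun k => Rmax (a k) 0) b lb) as [l1 [H1 _]]; auto.
  { intros k; specialize (H k); split; [apply Rmax_r|].
    apply Rmax_lub; [eapply Rle_trans; [apply RRle_abs|auto]|eapply Rle_trans; [apply Rabs_pos|eauto]]. }
  destruct (Ser_comp (fun k => Rmax (- a k) 0) b lb) as [l2 [H2 _]]; auto.
  { intros k; specialize (H k); split; [apply Rmax_r|].
    apply Rmax_lub; [eapply Rle_trans; [|eauto]; rewrite <- Rabs_Ropp; apply RRle_abs|eapply Rle_trans; [apply Rabs_pos|eauto]]. }
  exists (l1 + (-1) * l2). eapply Ser_ext; [|apply (Ser_plus _ _ _ _ H1 (Ser_scal _ _ (-1) H2))].
  intros k; simpl. unfold Rmax; destruct (Rle_dec (a k) 0); destruct (Rle_dec (- a k) 0); lra.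
Qed.

Lemma Ser_zero_terms a : (forall k, 0 <= a k) -> Ser a 0 -> forall k, a k = 0.
Proof.
  intros Hp Ha k. pose proof (Ser_partial_le a 0 (S k) Hp Ha). simpl in H.
  pose proof (rs_nonneg a k Hp). specialize (Hp k); lra.
Qed.

Lemma Lim_tail_small a l : Ser a l -> forall eps, 0 < eps -> exists N, forall n m, (N <= n)%nat -> (N <= m)%nat -> Rabs (rs a n - rs a m) < eps.
Proof. intros H; apply Lim_cauchy with l; auto. Qed.

Lemma series_sum_eq a l : Ser a l -> series_sum a = l.
Proof.
  intros H. unfold series_sum.
  pose proof (epsilon_spec (inhabits 0) (fun s => infinite_sum a s) (ex_intro _ l (proj2 (infsum_Ser a l) H))) as E.
  apply infsum_Ser in E. eapply Ser_unique; eauto.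
Qed.


Lemma Cx_eq a b : re a = re b -> im a = im b -> a = b.
Proof. destruct a, b; simpl; intros; subst; auto. Qed.

Ltac cx := repeat match goal with a : Cx |- _ => destruct a end; apply Cx_eq; simpl; ring.

Lemma Cmod2_nonneg a : 0 <= Cmod2 a.
Proof. unfold Cmod2; nra. Qed.
Lemma Cmod2_conj a : Cmod2 (Cconj a) = Cmod2 a.
Proof. unfold Cmod2; simpl; ring. Qed.
Lemma Cmod2_mul a b : Cmod2 (Cmul a b) = Cmod2 a * Cmod2 b.
Proof. unfold Cmod2; simpl; ring. Qed.
Lemma Cmod2_zero a : Cmod2 a = 0 -> a = C0.
Proof. unfold Cmod2, C0; destruct a as [x y]; simpl; intros; apply Cx_eq; simpl; nra. Qed.
Lemma re_mulconj a : re (Cmul a (Cconj a)) = Cmod2 a.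
Proof. unfold Cmod2; simpl; ring. Qed.
Lemma re_bound a b : Rabs (re (Cmul a (Cconj b))) <= Cmod2 a + Cmod2 b.
Proof. unfold Cmod2; destruct a as [x y], b as [z w]; simpl. pose proof (Rle_0_sqr (x-z)); pose proof (Rle_0_sqr (x+z)); pose proof (Rle_0_sqr (y-w)); pose proof (Rle_0_sqr (y+w)); pose proof (Rle_0_sqr (x-w)); pose proof (Rle_0_sqr (x+w)); pose proof (Rle_0_sqr (y-z)); pose proof (Rle_0_sqr (y+z)); unfold Rsqr in *. apply Rabs_le; split; nra. Qed.
Lemma im_bound a b : Rabs (im (Cmul a (Cconj b))) <= Cmod2 a + Cmod2 b.
Proof. unfold Cmod2; destruct a as [x y], b as [z w]; simpl. pose proof (Rle_0_sqr (x-z)); pose proof (Rle_0_sqr (x+z)); pose proof (Rle_0_sqr (y-w)); pose proof (Rle_0_sqr (y+w)); pose proof (Rle_0_sqr (x-w)); pose proof (Rle_0_sqr (x+w)); pose proof (Rle_0_sqr (y-z)); pose proof (Rle_0_sqr (y+z)); unfold Rsqr in *. apply Rabs_le; split; nra. Qed.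
Lemma Cmod2_lin a x y : Cmod2 (Cadd (Cmul a x) y) <= 2 * Cmod2 a * Cmod2 x + 2 * Cmod2 y.
Proof.
  rewrite Rmult_assoc, <- Cmod2_mul. generalize (Cmul a x); intros p.
  unfold Cmod2; destruct p as [p1 p2], y as [y1 y2]; simpl.
  pose proof (Rle_0_sqr (p1-y1)); pose proof (Rle_0_sqr (p2-y2)); unfold Rsqr in *. nra.
Qed.

Definition n2 (c : nat -> Cx) := series_sum (fun n => Cmod2 (c n)).

Lemma is_l2_Ser c : is_l2 c <-> exists l, Ser (fun n => Cmod2 (c n)) l.
Proof. split; intros [l H]; exists l; apply infsum_Ser; auto. Qed.

Lemma l2_ser c : is_l2 c -> Ser (fun n => Cmod2 (c n)) (n2 c).
Proof. intros H; apply is_l2_Ser in H as [l Hl]. unfold n2; rewrite (series_sum_eq _ _ Hl); auto. Qed.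

Lemma n2_nonneg c : is_l2 c -> 0 <= n2 c.
Proof. intros H; eapply Ser_nonneg; [|apply l2_ser; auto]; intros; apply Cmod2_nonneg. Qed.

Lemma l2norm_sq c : is_l2 c -> l2norm c ^ 2 = n2 c.
Proof. intros H; unfold l2norm; rewrite pow2_sqrt; auto; apply n2_nonneg; auto. Qed.

Lemma l2norm_n2 c : l2norm c = sqrt (n2 c).
Proof. reflexivity. Qed.

Definition lin (a : Cx) (c d : nat -> Cx) : nat -> Cx := fun n => Cadd (Cmul a (c n)) (d n).

Lemma l2_lin a c d : is_l2 c -> is_l2 d -> is_l2 (lin a c d).
Proof.
  intros Hc Hd. apply l2_ser in Hc; apply l2_ser in Hd. apply is_l2_Ser.
  destruct (Ser_comp (fun n => Cmod2 (lin a c d n)) (fun n => 2 * Cmod2 a * Cmod2 (c n) + 2 * Cmod2 (d n))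
    (2 * Cmod2 a * n2 c + 2 * n2 d)) as [l [Hl _]].
  - intros; split; [apply Cmod2_nonneg|apply Cmod2_lin].
  - apply Ser_plus; [|apply Ser_scal; auto]. apply Ser_scal; auto.
  - exists l; auto.
Qed.

Lemma l2_re_ser c d : is_l2 c -> is_l2 d -> Ser (fun n => re (Cmul (c n) (Cconj (d n)))) (re (l2inner c d)).
Proof.
  intros Hc Hd. apply l2_ser in Hc; apply l2_ser in Hd.
  destruct (Ser_abs (fun n => re (Cmul (c n) (Cconj (d n)))) _ _ (fun k => re_bound (c k) (d k)) (Ser_plus _ _ _ _ Hc Hd)) as [l Hl].
  change (re (l2inner c d)) with (series_sum (fun n => re (Cmul (c n) (Cconj (d n))))). rewrite (series_sum_eq _ _ Hl); auto.
Qed.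
Lemma l2_im_ser c d : is_l2 c -> is_l2 d -> Ser (fun n => im (Cmul (c n) (Cconj (d n)))) (im (l2inner c d)).
Proof.
  intros Hc Hd. apply l2_ser in Hc; apply l2_ser in Hd.
  destruct (Ser_abs (fun n => im (Cmul (c n) (Cconj (d n)))) _ _ (fun k => im_bound (c k) (d k)) (Ser_plus _ _ _ _ Hc Hd)) as [l Hl].
  change (im (l2inner c d)) with (series_sum (fun n => im (Cmul (c n) (Cconj (d n))))). rewrite (series_sum_eq _ _ Hl); auto.
Qed.

Lemma l2inner_lin1 a c d e : is_l2 c -> is_l2 d -> is_l2 e ->
  l2inner (lin a c d) e = Cadd (Cmul a (l2inner c e)) (l2inner d e).
Proof.
  intros Hc Hd He. pose proof (l2_re_ser _ _ Hc He) as R1. pose proof (l2_im_ser _ _ Hc He) as I1.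
  pose proof (l2_re_ser _ _ Hd He) as R2. pose proof (l2_im_ser _ _ Hd He) as I2.
  pose proof (l2_lin a c d Hc Hd) as Hl.
  pose proof (l2_re_ser _ _ Hl He) as R3. pose proof (l2_im_ser _ _ Hl He) as I3.
  revert R1 I1 R2 I2 R3 I3. generalize (l2inner c e) (l2inner d e) (l2inner (lin a c d) e).
  intros X Y Z R1 I1 R2 I2 R3 I3.
  apply Cx_eq.
  - transitivity (re a * re X + - im a * im X + re Y); [|destruct a, X, Y; simpl; ring].
    eapply Ser_unique; [exact R3|].
    eapply Ser_ext; [|apply (Ser_plus _ _ _ _ (Ser_plus _ _ _ _ (Ser_scal _ _ (re a) R1) (Ser_scal _ _ (- im a) I1)) R2)].
    intros k; unfold lin, Cmul, Cconj, Cadd; simpl; ring.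
  - transitivity (re a * im X + im a * re X + im Y); [|destruct a, X, Y; simpl; ring].
    eapply Ser_unique; [exact I3|].
    eapply Ser_ext; [|apply (Ser_plus _ _ _ _ (Ser_plus _ _ _ _ (Ser_scal _ _ (re a) I1) (Ser_scal _ _ (im a) R1)) I2)].
    intros k; unfold lin, Cmul, Cconj, Cadd; simpl; ring.
Qed.

Lemma l2inner_conj c d : is_l2 c -> is_l2 d -> l2inner d c = Cconj (l2inner c d).
Proof.
  intros Hc Hd. pose proof (l2_re_ser _ _ Hc Hd) as R1. pose proof (l2_im_ser _ _ Hc Hd) as I1.
  pose proof (l2_re_ser _ _ Hd Hc) as R2. pose proof (l2_im_ser _ _ Hd Hc) as I2.
  revert R1 I1 R2 I2. generalize (l2inner c d) (l2inner d c). intros X Y R1 I1 R2 I2.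
  apply Cx_eq.
  - transitivity (re X); [|destruct X; simpl; ring].
    eapply Ser_unique; [exact R2|]. eapply Ser_ext; [|exact R1]. intros k; unfold Cmul, Cconj; simpl; ring.
  - transitivity (-1 * im X); [|destruct X; simpl; ring].
    eapply Ser_unique; [exact I2|]. eapply Ser_ext; [|apply (Ser_scal _ _ (-1) I1)]. intros k; unfold Cmul, Cconj; simpl; ring.
Qed.

Lemma l2inner_self_re c : re (l2inner c c) = n2 c.
Proof. simpl. unfold n2. f_equal. apply functional_extensionality; intros; apply re_mulconj. Qed.

Lemma n2_zero c : is_l2 c -> n2 c = 0 -> forall k, c k = C0.
Proof.
  intros Hc H0 k. apply Cmod2_zero. apply (Ser_zero_terms (fun n => Cmod2 (c n))); [intros; apply Cmod2_nonneg|].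
  rewrite <- H0; apply l2_ser; auto.
Qed.

Definition mone := mkC (-1) 0.

Lemma n2_diff c d : is_l2 c -> is_l2 d ->
  n2 (lin mone c d) = n2 c + n2 d - 2 * re (l2inner c d).
Proof.
  intros Hc Hd. rewrite <- !l2inner_self_re.
  pose proof (l2_lin mone c d Hc Hd) as Hl.
  rewrite l2inner_lin1; auto. rewrite (l2inner_conj (lin mone c d) c); auto.
  rewrite (l2inner_conj (lin mone c d) d); auto.
  rewrite !l2inner_lin1; auto. rewrite (l2inner_conj c d); auto.
  unfold mone; destruct (l2inner c c), (l2inner c d), (l2inner d d); simpl; ring.
Qed.

Lemma n2_ext c d : (forall k, c k = d k) -> n2 c = n2 d.
Proof. intros E; f_equal; apply functional_extensionality; auto. Qed.
Lemma l2inner_ext c d e f : (forall k, c k = d k) -> (forall k, e k = f k) -> l2inner c e = l2inner d f.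
Proof. intros E1 E2. replace d with c by (apply functional_extensionality; auto).
  replace f with e by (apply functional_extensionality; auto). auto. Qed.


Arguments hadd_assoc {h}. Arguments hadd_comm {h}. Arguments hadd_0 {h}. Arguments hadd_opp {h}.
Arguments hscal_1 {h}. Arguments hscal_assoc {h}. Arguments hscal_distr_v {h}. Arguments hscal_distr_s {h}.
Arguments inner_add_l {h}. Arguments inner_scal_l {h}. Arguments inner_conj {h}. Arguments inner_pos {h}. Arguments inner_def {h}.

Definition rsc (t : R) : Cx := mkC t 0.

Section HB.
Context {X : HSpace}.
Implicit Types x y z : X.

Lemma hadd_0l x : hadd hz x = x.
Proof. rewrite hadd_comm; apply hadd_0. Qed.

Lemma hadd_cancel x y z : hadd x y = hadd x z -> y = z.
Proof.
  intros E. rewrite <- (hadd_0l y), <- (hadd_0l z). rewrite <- (hadd_opp x). rewrite (hadd_comm x).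
  rewrite <- !hadd_assoc, E; auto.
Qed.

Lemma hscal_0 x : hscal C0 x = hz.
Proof.
  apply (hadd_cancel (hscal C0 x)). rewrite hadd_0, <- hscal_distr_s. f_equal. apply Cx_eq; simpl; ring.
Qed.

Lemma hopp_scal x : hopp x = hscal mone x.
Proof.
  assert (E : hadd x (hscal mone x) = hz).
  { rewrite <- (hscal_1 x) at 1. rewrite <- hscal_distr_s, <- (hscal_0 x). f_equal. apply Cx_eq; unfold mone, C1, C0; simpl; ring. }
  apply (hadd_cancel x). rewrite hadd_opp, E; auto.
Qed.

Lemma hscal_z a : hscal a (@hz X) = hz.
Proof. rewrite <- (hscal_0 hz), hscal_assoc. f_equal. apply Cx_eq; unfold C0; simpl; ring. Qed.

Lemma Cconj_conj a : Cconj (Cconj a) = a.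
Proof. cx. Qed.

Lemma inner_add_r x y z : hinner x (hadd y z) = Cadd (hinner x y) (hinner x z).
Proof. rewrite inner_conj, inner_add_l, (inner_conj y x), (inner_conj z x). cx. Qed.

Lemma inner_scal_r a x y : hinner x (hscal a y) = Cmul (Cconj a) (hinner x y).
Proof. rewrite inner_conj, inner_scal_l, (inner_conj y x). cx. Qed.

Lemma inner_0_l y : hinner hz y = C0.
Proof. rewrite <- (hscal_0 hz), inner_scal_l. unfold C0; cx. Qed.
Lemma inner_0_r y : hinner y hz = C0.
Proof. rewrite <- (hscal_0 hz), inner_scal_r. unfold C0; cx. Qed.

Lemma hsub_scal x y : hsub x y = hadd x (hscal mone y).
Proof. unfold hsub; rewrite hopp_scal; auto. Qed.

Lemma inner_sub_l x y z : hinner (hsub x y) z = Cadd (hinner x z) (Cmul mone (hinner y z)).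
Proof. rewrite hsub_scal, inner_add_l, inner_scal_l; auto. Qed.
Lemma inner_sub_r x y z : hinner z (hsub x y) = Cadd (hinner z x) (Cmul mone (hinner z y)).
Proof. rewrite hsub_scal, inner_add_r, inner_scal_r. f_equal. unfold mone; cx. Qed.

Lemma im_inner_self x : im (hinner x x) = 0.
Proof. pose proof (inner_conj x x) as E. apply (f_equal im) in E. simpl in E. lra. Qed.

Lemma re_inner_sym x y : re (hinner y x) = re (hinner x y).
Proof. rewrite inner_conj; simpl; auto. Qed.

Lemma hnorm_nonneg x : 0 <= hnorm x.
Proof. apply sqrt_pos. Qed.
Lemma hnorm_sq x : hnorm x ^ 2 = re (hinner x x).
Proof. unfold hnorm; rewrite pow2_sqrt; auto; apply inner_pos. Qed.

Lemma hnorm_sq_zero x : re (hinner x x) = 0 -> x = hz.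
Proof. intros E; apply inner_def. apply Cx_eq; [rewrite E|rewrite im_inner_self]; auto. Qed.
Lemma hnorm_zero x : hnorm x = 0 -> x = hz.
Proof. intros E; apply hnorm_sq_zero. rewrite <- hnorm_sq, E; ring. Qed.
Lemma hnorm_z : hnorm (@hz X) = 0.
Proof. unfold hnorm; rewrite inner_0_l; simpl; apply sqrt_0. Qed.

Lemma normsq_add x y : re (hinner (hadd x y) (hadd x y)) = re (hinner x x) + 2 * re (hinner x y) + re (hinner y y).
Proof. rewrite inner_add_l, !inner_add_r. simpl. rewrite (re_inner_sym x y); ring. Qed.

Lemma normsq_scal a x : re (hinner (hscal a x) (hscal a x)) = Cmod2 a * re (hinner x x).
Proof. rewrite inner_scal_l, inner_scal_r. unfold Cmod2; simpl. rewrite im_inner_self. ring. Qed.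

Lemma hnorm_scal a x : hnorm (hscal a x) = sqrt (Cmod2 a) * hnorm x.
Proof. unfold hnorm; rewrite normsq_scal, sqrt_mult; auto; [apply Cmod2_nonneg|apply inner_pos]. Qed.

Lemma hnorm_rsc t x : hnorm (hscal (rsc t) x) = Rabs t * hnorm x.
Proof. rewrite hnorm_scal. unfold Cmod2, rsc; simpl. f_equal. rewrite Rmult_0_l, Rplus_0_r, <- Rsqr_def. apply sqrt_Rsqr_abs. Qed.

Lemma normsq_sub x y : re (hinner (hsub x y) (hsub x y)) = re (hinner x x) - 2 * re (hinner x y) + re (hinner y y).
Proof.
  rewrite hsub_scal, normsq_add, normsq_scal, inner_scal_r. unfold mone, Cmod2; simpl. ring.
Qed.

Lemma discr a b c : 0 <= a -> (forall t, 0 <= a * t * t + 2 * b * t + c) -> b * b <= a * c.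
Proof.
  intros Ha H. destruct (Req_dec a 0) as [E|E].
  - subst. destruct (Req_dec b 0) as [->|Hb]; [lra|].
    specialize (H (- (Rabs c + 1) / (2 * b))). exfalso.
    assert (2 * b * (- (Rabs c + 1) / (2 * b)) = - (Rabs c + 1)) by (field; auto).
    pose proof (Rle_abs c). lra.
  - specialize (H (- b / a)).
    assert (a * (- b / a) * (- b / a) + 2 * b * (- b / a) + c = (a * c - b * b) / a) by (field; auto).
    rewrite H0 in H. assert (0 < a) by lra.
    apply Rmult_le_compat_r with (r := a) in H; [|lra]. unfold Rdiv in H. rewrite Rmult_assoc, Rinv_l in H; lra.
Qed.

Lemma CS_re x y : re (hinner x y) <= hnorm x * hnorm y.
Proof.
  assert (Hd : re (hinner x y) * re (hinner x y) <= re (hinner y y) * re (hinner x x)).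
  { apply discr; [apply inner_pos|]. intros t.
    pose proof (inner_pos (hadd x (hscal (rsc t) y))) as P. rewrite normsq_add, normsq_scal, inner_scal_r in P.
    unfold Cmod2, rsc in P; simpl in P. nra. }
  destruct (Rle_dec (re (hinner x y)) 0) as [Hn|Hp].
  - pose proof (hnorm_nonneg x); pose proof (hnorm_nonneg y). nra.
  - apply Rsqr_incr_0_var; [|apply Rmult_le_pos; apply hnorm_nonneg].
    unfold Rsqr. replace (hnorm x * hnorm y * (hnorm x * hnorm y)) with (hnorm x ^ 2 * hnorm y ^ 2) by ring.
    rewrite !hnorm_sq. lra.
Qed.

Lemma CS_abs x y : Rabs (re (hinner x y)) <= hnorm x * hnorm y.
Proof.
  apply Rabs_le; split; [|apply CS_re].
  pose proof (CS_re (hscal mone x) y) as H. rewrite inner_scal_l, hnorm_scal in H.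
  unfold mone, Cmod2 in H; simpl in H. replace (-1 * -1 + 0 * 0) with 1 in H by ring. rewrite sqrt_1 in H. lra.
Qed.

Lemma hnorm_triang x y : hnorm (hadd x y) <= hnorm x + hnorm y.
Proof.
  apply Rsqr_incr_0_var; [|pose proof (hnorm_nonneg x); pose proof (hnorm_nonneg y); lra].
  unfold Rsqr. replace (hnorm (hadd x y) * hnorm (hadd x y)) with (hnorm (hadd x y) ^ 2) by ring.
  rewrite hnorm_sq, normsq_add. pose proof (CS_re x y). rewrite <- !hnorm_sq. nra.
Qed.

Lemma hsub_add x y z : hsub x z = hadd (hsub x y) (hsub y z).
Proof.
  unfold hsub. rewrite <- hadd_assoc, (hadd_assoc (hopp y)), (hadd_comm (hopp y) y), hadd_opp, hadd_0l. auto.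
Qed.

Lemma hnorm_sub_triang x y z : hnorm (hsub x z) <= hnorm (hsub x y) + hnorm (hsub y z).
Proof. rewrite (hsub_add x y z); apply hnorm_triang. Qed.

Lemma hsub_sym_norm x y : hnorm (hsub x y) = hnorm (hsub y x).
Proof.
  unfold hnorm. rewrite !normsq_sub, (re_inner_sym x y). f_equal; ring.
Qed.

Lemma hsub_diag x : hsub x x = hz.
Proof. apply hadd_opp. Qed.

Lemma hsub_0 x : hsub x hz = x.
Proof. rewrite hsub_scal, hscal_z, hadd_0; auto. Qed.

Lemma hnorm_sub_lower x y : hnorm x - hnorm y <= hnorm (hsub x y).
Proof. pose proof (hnorm_sub_triang x y hz). rewrite !hsub_0 in H. lra. Qed.

End HB.


Section HS4.
Context {X : HSpace}.
Implicit Types x y z : X. Implicit Types f g : nat -> X.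

Lemma hadd_swap4 (a b c d : X) : hadd (hadd a b) (hadd c d) = hadd (hadd a c) (hadd b d).
Proof.
  rewrite <- !hadd_assoc. f_equal. rewrite !hadd_assoc. f_equal. apply hadd_comm.
Qed.

Lemma hsub_add4 (a b c d : X) : hsub (hadd a b) (hadd c d) = hadd (hsub a c) (hsub b d).
Proof. rewrite !hsub_scal, hscal_distr_v. apply hadd_swap4. Qed.

Lemma hscal_sub a x y : hsub (hscal a x) (hscal a y) = hscal a (hsub x y).
Proof. rewrite !hsub_scal, hscal_distr_v, !hscal_assoc. f_equal. f_equal. cx. Qed.

Lemma hscal_add_s a b x : hadd (hscal a x) (hscal b x) = hscal (Cadd a b) x.
Proof. rewrite hscal_distr_s; auto. Qed.

Lemma hpsum_ext f g n : (forall k, f k = g k) -> hpsum f n = hpsum g n.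
Proof. intros E; induction n; simpl; [auto|rewrite IHn, E; auto]. Qed.

Lemma hpsum_add f g n : hpsum (fun k => hadd (f k) (g k)) n = hadd (hpsum f n) (hpsum g n).
Proof. induction n; simpl; [rewrite hadd_0; auto|rewrite IHn; apply hadd_swap4]. Qed.

Lemma hpsum_scal a f n : hpsum (fun k => hscal a (f k)) n = hscal a (hpsum f n).
Proof. induction n; simpl; [rewrite hscal_z; auto|rewrite IHn, hscal_distr_v; auto]. Qed.

Lemma hpsum_lin a f g n : hpsum (fun k => hadd (hscal a (f k)) (g k)) n = hadd (hscal a (hpsum f n)) (hpsum g n).
Proof. rewrite hpsum_add, hpsum_scal; auto. Qed.

Lemma re_inner_hpsum f n y : re (hinner (hpsum f n) y) = rs (fun k => re (hinner (f k) y)) n.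
Proof. induction n; simpl; [rewrite inner_0_l; auto|rewrite inner_add_l; simpl; rewrite IHn; auto]. Qed.

Lemma im_inner_hpsum f n y : im (hinner (hpsum f n) y) = rs (fun k => im (hinner (f k) y)) n.
Proof. induction n; simpl; [rewrite inner_0_l; auto|rewrite inner_add_l; simpl; rewrite IHn; auto]. Qed.

Definition Ci := mkC 0 1.
Lemma im_as_re x y : im (hinner x y) = re (hinner x (hscal Ci y)).
Proof. rewrite inner_scal_r. unfold Ci; simpl; ring. Qed.

Definition cz (a : nat -> Cx) (n : nat) : nat -> Cx := fun j => if (j <? n)%nat then a j else C0.



Lemma span_pad_eq (u : nat -> X) a n : 
  hpsum (fun j => hscal (a j) (u j)) n = hpsum (fun j => hscal (cz a n j) (u j)) n.
Proof.
  assert (forall m, (m <= n)%nat -> hpsum (fun j => hscal (a j) (u j)) m = hpsum (fun j => hscal (cz a n j) (u j)) m).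
  { induction m; intros Hm; simpl; auto. rewrite IHm by lia. unfold cz.
    replace (m <? n)%nat with true by (symmetry; apply Nat.ltb_lt; lia). auto. }
  apply H; lia.
Qed.

Lemma span_pad (u : nat -> X) a n m : (n <= m)%nat ->
  hpsum (fun j => hscal (a j) (u j)) n = hpsum (fun j => hscal (cz a n j) (u j)) m.
Proof.
  intros H. induction H.
  - apply span_pad_eq.
  - simpl. rewrite <- IHle. unfold cz. replace (m <? n)%nat with false by (symmetry; apply Nat.ltb_ge; lia).
    rewrite hscal_0, hadd_0; auto.
Qed.

Lemma in_span_lin (u : nat -> X) a x y : in_span u x -> in_span u y -> in_span u (hadd (hscal a x) y).
Proof.
  intros [n [b ->]] [m [c ->]]. exists (max n m).
  exists (fun j => Cadd (Cmul a (cz b n j)) (cz c m j)).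
  rewrite (span_pad u b n (max n m)) by lia. rewrite (span_pad u c m (max n m)) by lia.
  rewrite <- hpsum_lin. apply hpsum_ext. intros k. rewrite hscal_assoc, hscal_distr_s; auto.
Qed.

Lemma in_span_z (u : nat -> X) : in_span u hz.
Proof. exists O, (fun _ => C0); auto. Qed.

Lemma in_span_cspan (u : nat -> X) x : in_span u x -> in_cspan u x.
Proof. intros H e He; exists x; split; auto. rewrite hsub_diag, hnorm_z; auto. Qed.

Lemma lin_sub a x y x' y' : hsub (hadd (hscal a x) y) (hadd (hscal a x') y') = hadd (hscal a (hsub x x')) (hsub y y').
Proof. rewrite hsub_add4, hscal_sub; auto. Qed.

Lemma in_cspan_lin (u : nat -> X) a x y : in_cspan u x -> in_cspan u y -> in_cspan u (hadd (hscal a x) y).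
Proof.
  intros Hx Hy e He. set (k := sqrt (Cmod2 a) + 1).
  assert (Hk : 0 < k) by (unfold k; pose proof (sqrt_pos (Cmod2 a)); lra).
  destruct (Hx (e / 2 / k)) as [x' [Sx Nx]]. { apply Rdiv_lt_0_compat; lra. }
  destruct (Hy (e / 2)) as [y' [Sy Ny]]. { lra. }
  exists (hadd (hscal a x') y'); split; [apply in_span_lin; auto|].
  rewrite lin_sub. eapply Rle_lt_trans; [apply hnorm_triang|]. rewrite hnorm_scal.
  assert (sqrt (Cmod2 a) * hnorm (hsub x x') <= e / 2).
  { apply Rle_trans with (k * (e / 2 / k)); [|right; field; lra].
    pose proof (sqrt_pos (Cmod2 a)); pose proof (hnorm_nonneg (hsub x x')).
    apply Rmult_le_compat; unfold k in *; lra. }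
  lra.
Qed.

Lemma in_cspan_closed (u : nat -> X) (w : X) : (forall eps, 0 < eps -> exists y, in_cspan u y /\ hnorm (hsub w y) < eps) -> in_cspan u w.
Proof.
  intros H e He. destruct (H (e/2) ltac:(lra)) as [y [Hy N1]]. destruct (Hy (e/2) ltac:(lra)) as [z [Hz N2]].
  exists z; split; auto. eapply Rle_lt_trans; [apply (hnorm_sub_triang w y z)|lra].
Qed.

Lemma in_cspan_z (u : nat -> X) : in_cspan u hz.
Proof. apply in_span_cspan, in_span_z. Qed.

Lemma in_cspan_scal (u : nat -> X) a x : in_cspan u x -> in_cspan u (hscal a x).
Proof. intros H. rewrite <- (hadd_0 (hscal a x)). apply in_cspan_lin; auto; apply in_cspan_z. Qed.

Lemma in_cspan_sub (u : nat -> X) x y : in_cspan u x -> in_cspan u y -> in_cspan u (hsub x y).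
Proof. intros Hx Hy. rewrite hsub_scal, hadd_comm. apply in_cspan_lin; auto. Qed.

Lemma in_cspan_add (u : nat -> X) x y : in_cspan u x -> in_cspan u y -> in_cspan u (hadd x y).
Proof. intros Hx Hy. rewrite <- (hscal_1 x). apply in_cspan_lin; auto. Qed.

Lemma in_cspan_gen (u : nat -> X) j : in_cspan u (u j).
Proof.
  apply in_span_cspan. exists (S j), (fun k => if (k =? j)%nat then Defs.C1 else Defs.C0).
  assert (forall m, (m <= j)%nat -> hpsum (fun k => hscal (if (k =? j)%nat then Defs.C1 else Defs.C0) (u k)) m = hz).
  { induction m; intros; simpl; auto. rewrite IHm by lia. replace (m =? j)%nat with false by (symmetry; apply Nat.eqb_neq; lia).
    rewrite hscal_0, hadd_0; auto. }
  simpl. rewrite H by lia. rewrite Nat.eqb_refl, hscal_1, hadd_0l; auto.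
Qed.

Lemma hsub_eq x y : hsub x y = hz -> x = y.
Proof.
  unfold hsub; intros E. rewrite <- (hadd_0 x), <- (hadd_opp y), (hadd_comm y), hadd_assoc, E, hadd_0l; auto.
Qed.

Lemma has_sum_unique f x y : has_sum f x -> has_sum f y -> x = y.
Proof.
  intros Hx Hy. apply hsub_eq, hnorm_zero. destruct (Rle_dec (hnorm (hsub x y)) 0) as [|Hn].
  { pose proof (hnorm_nonneg (hsub x y)); lra. }
  exfalso. set (e := hnorm (hsub x y) / 2).
  destruct (Hx e ltac:(unfold e; lra)) as [N1 H1]. destruct (Hy e ltac:(unfold e; lra)) as [N2 H2].
  specialize (H1 (max N1 N2) ltac:(lia)); specialize (H2 (max N1 N2) ltac:(lia)).
  pose proof (hnorm_sub_triang x (hpsum f (max N1 N2)) y). rewrite (hsub_sym_norm x (hpsum f (max N1 N2))) in H. unfold e in *; lra.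
Qed.

Lemma has_sum_lin a f g x y : has_sum f x -> has_sum g y -> has_sum (fun k => hadd (hscal a (f k)) (g k)) (hadd (hscal a x) y).
Proof.
  intros Hx Hy e He. set (k := sqrt (Cmod2 a) + 1).
  assert (Hk : 0 < k) by (unfold k; pose proof (sqrt_pos (Cmod2 a)); lra).
  destruct (Hx (e / 2 / k)) as [N1 H1]. { apply Rdiv_lt_0_compat; lra. }
  destruct (Hy (e / 2)) as [N2 H2]. { lra. }
  exists (max N1 N2); intros n Hn. rewrite hpsum_lin, lin_sub.
  specialize (H1 n ltac:(lia)); specialize (H2 n ltac:(lia)).
  eapply Rle_lt_trans; [apply hnorm_triang|]. rewrite hnorm_scal.
  assert (sqrt (Cmod2 a) * hnorm (hsub (hpsum f n) x) <= e / 2).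
  { apply Rle_trans with (k * (e / 2 / k)); [|right; field; lra].
    pose proof (sqrt_pos (Cmod2 a)); pose proof (hnorm_nonneg (hsub (hpsum f n) x)).
    apply Rmult_le_compat; unfold k in *; lra. }
  lra.
Qed.

Lemma has_sum_re f x y : has_sum f x -> Lim (fun n => re (hinner (hpsum f n) y)) (re (hinner x y)).
Proof.
  intros H e He. destruct (H (e / (hnorm y + 1))) as [N HN].
  { apply Rdiv_lt_0_compat; [lra|pose proof (hnorm_nonneg y); lra]. }
  exists N; intros n Hn. specialize (HN n Hn).
  replace (re (hinner (hpsum f n) y) - re (hinner x y)) with (re (hinner (hsub (hpsum f n) x) y))
    by (rewrite inner_sub_l; unfold mone; simpl; ring).
  eapply Rle_lt_trans; [apply CS_abs|].
  pose proof (hnorm_nonneg y); pose proof (hnorm_nonneg (hsub (hpsum f n) x)).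
  apply Rle_lt_trans with ((e / (hnorm y + 1)) * hnorm y).
  { apply Rmult_le_compat_r; lra. }
  apply Rlt_le_trans with ((e / (hnorm y + 1)) * (hnorm y + 1)); [apply Rmult_lt_compat_l; [apply Rdiv_lt_0_compat|]; lra|].
  right; field; lra.
Qed.

Lemma has_sum_im f x y : has_sum f x -> Lim (fun n => im (hinner (hpsum f n) y)) (im (hinner x y)).
Proof.
  intros H. eapply Lim_ext; [|rewrite im_as_re; apply (has_sum_re _ _ (hscal Ci y) H)].
  intros; simpl; rewrite im_as_re; auto.
Qed.

Lemma has_sum_norm f x : has_sum f x -> Lim (fun n => hnorm (hpsum f n)) (hnorm x).
Proof.
  intros H e He. destruct (H e He) as [N HN]. exists N; intros n Hn. specialize (HN n Hn).
  pose proof (hnorm_sub_lower (hpsum f n) x). pose proof (hnorm_sub_lower x (hpsum f n)).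
  rewrite hsub_sym_norm in H1. apply Rabs_def1; lra.
Qed.

Lemma has_sum_cspan (u : nat -> X) c x : has_sum (fun k => hscal (c k) (u k)) x -> in_cspan u x.
Proof.
  intros H e He. destruct (H e He) as [N HN]. exists (hpsum (fun k => hscal (c k) (u k)) N). split.
  - exists N, c; auto.
  - rewrite hsub_sym_norm; apply HN; lia.
Qed.

End HS4.


Lemma fin_CS (a b : nat -> R) n : rs (fun k => a k * b k) n * rs (fun k => a k * b k) n <= rs (fun k => a k * a k) n * rs (fun k => b k * b k) n.
Proof.
  rewrite (Rmult_comm (rs (fun k => a k * a k) n)).
  apply discr; [apply rs_nonneg; intros; nra|]. intros t.
  assert (E : rs (fun k => b k * b k) n * t * t + 2 * rs (fun k => a k * b k) n * t + rs (fun k => a k * a k) n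
    = rs (fun k => (b k * t + a k) * (b k * t + a k)) n).
  { clear. induction n; simpl; [ring|rewrite <- IHn; ring]. }
  rewrite E; apply rs_nonneg; intros; apply Rle_0_sqr.
Qed.

Lemma fin_CS_sqrt (a b : nat -> R) n : (forall k, 0 <= a k) -> (forall k, 0 <= b k) ->
  rs (fun k => a k * b k) n <= sqrt (rs (fun k => a k * a k) n) * sqrt (rs (fun k => b k * b k) n).
Proof.
  intros Ha Hb. rewrite <- sqrt_mult by (apply rs_nonneg; intros; nra).
  apply Rsqr_incr_0_var; [|apply sqrt_pos]. rewrite Rsqr_sqrt; [unfold Rsqr; apply fin_CS|].
  apply Rmult_le_pos; apply rs_nonneg; intros; nra.
Qed.

Lemma re_mul_le a z : re (Cmul a z) <= sqrt (Cmod2 a) * sqrt (Cmod2 z).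
Proof.
  rewrite <- sqrt_mult by apply Cmod2_nonneg. rewrite <- Cmod2_mul.
  generalize (Cmul a z); intros w. unfold Cmod2. destruct w as [p q]; simpl.
  destruct (Rle_dec p 0). { pose proof (sqrt_pos (p*p+q*q)); lra. }
  apply Rsqr_incr_0_var; [|apply sqrt_pos]. rewrite Rsqr_sqrt by nra. unfold Rsqr; nra.
Qed.

Lemma sqrt_sq_id r : 0 <= r -> sqrt r * sqrt r = r.
Proof. intros; apply sqrt_sqrt; auto. Qed.

Section HS5.
Context {X : HSpace}.
Implicit Types x y z h : X.

Definition Bes (u : nat -> X) (B : R) : Prop :=
  0 <= B /\ forall f, in_cspan u f -> exists s, Ser (fun j => Cmod2 (hinner f (u j))) s /\ s <= B * hnorm f ^ 2.

Lemma frame_Bes u A B : frame_seq u A B -> Bes u B.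
Proof.
  intros [HA [HB H]]. split; [lra|]. intros f Hf. destruct (H f Hf) as [s [Hs [_ Hs2]]].
  exists s; split; auto. apply infsum_Ser; auto.
Qed.

Lemma rs_Cmod2_nonneg (a : nat -> Cx) n : 0 <= rs (fun k => Cmod2 (a k)) n.
Proof. apply rs_nonneg; intros; apply Cmod2_nonneg. Qed.

Lemma synth_fin_bound u B : Bes u B -> forall a n,
  hnorm (hpsum (fun k => hscal (a k) (u k)) n) ^ 2 <= B * rs (fun k => Cmod2 (a k)) n.
Proof.
  intros [HB HBes] a n. set (s := hpsum (fun k => hscal (a k) (u k)) n).
  assert (Hs : in_cspan u s) by (apply in_span_cspan; exists n, a; auto).
  destruct (HBes s Hs) as [sig [Hsig Hle]].
  set (al := fun k => sqrt (Cmod2 (a k))). set (be := fun k => sqrt (Cmod2 (hinner s (u k)))).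
  assert (E1 : hnorm s ^ 2 <= rs (fun k => al k * be k) n).
  { rewrite hnorm_sq. unfold s at 1. rewrite re_inner_hpsum. apply rs_le. intros k.
    rewrite inner_scal_l. unfold al, be. rewrite <- (Cmod2_conj (hinner s (u k))), <- inner_conj. apply re_mul_le. }
  assert (E2 : rs (fun k => al k * be k) n <= sqrt (rs (fun k => Cmod2 (a k)) n) * sqrt (B * hnorm s ^ 2)).
  { eapply Rle_trans; [apply fin_CS_sqrt; intros; apply sqrt_pos|].
    unfold al, be. rewrite (rs_ext (fun k => sqrt (Cmod2 (a k)) * sqrt (Cmod2 (a k))) (fun k => Cmod2 (a k)))
      by (intros; apply sqrt_sq_id, Cmod2_nonneg).
    rewrite (rs_ext (fun k => sqrt (Cmod2 (hinner s (u k))) * sqrt (Cmod2 (hinner s (u k)))) (fun k => Cmod2 (hinner s (u k))))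
      by (intros; apply sqrt_sq_id, Cmod2_nonneg).
    apply Rmult_le_compat_l; [apply sqrt_pos|]. apply sqrt_le_1_alt.
    eapply Rle_trans; [|exact Hle]. apply Ser_partial_le; auto; intros; apply Cmod2_nonneg. }
  rewrite sqrt_mult in E2 by (auto; apply pow2_ge_0). rewrite sqrt_pow2 in E2 by apply hnorm_nonneg.
  set (sg := rs (fun k => Cmod2 (a k)) n) in *. pose proof (rs_Cmod2_nonneg a n) as Hsg. fold sg in Hsg.
  pose proof (hnorm_nonneg s). pose proof (sqrt_pos sg). pose proof (sqrt_pos B).
  assert (hnorm s <= sqrt sg * sqrt B).
  { destruct (Req_dec (hnorm s) 0) as [->|Hn]; [apply Rmult_le_pos; auto|].
    apply Rmult_le_reg_r with (hnorm s); [lra|]. nra. }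
  replace (B * sg) with ((sqrt sg * sqrt B) ^ 2).
  - apply pow_incr; lra.
  - rewrite Rpow_mult_distr, !pow2_sqrt; auto; ring.
Qed.

Lemma bessel_fin u B : Bes u B -> forall h n, rs (fun k => Cmod2 (hinner h (u k))) n <= B * hnorm h ^ 2.
Proof.
  intros HBB h n. pose proof (synth_fin_bound u B HBB (fun k => hinner h (u k)) n) as Hb.
  set (s := hpsum (fun k => hscal (hinner h (u k)) (u k)) n) in *.
  set (sg := rs (fun k => Cmod2 (hinner h (u k))) n) in *.
  assert (E : re (hinner s h) = sg).
  { unfold s; rewrite re_inner_hpsum. apply rs_ext. intros k. rewrite inner_scal_l, (inner_conj h (u k)).
    apply re_mulconj. }
  pose proof (CS_re s h). rewrite E in H.
  destruct HBB as [HB _].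
  assert (Hsg : 0 <= sg) by (apply rs_nonneg; intros; apply Cmod2_nonneg).
  pose proof (hnorm_nonneg s); pose proof (hnorm_nonneg h).
  (* sg^2 <= |s|^2 |h|^2 <= B sg |h|^2 *)
  assert (sg * sg <= B * sg * hnorm h ^ 2).
  { apply Rle_trans with (hnorm s ^ 2 * hnorm h ^ 2); [apply Rle_trans with ((hnorm s * hnorm h) * (hnorm s * hnorm h)); [apply Rmult_le_compat; lra|right; ring]|].
    replace (B * sg * hnorm h ^ 2) with ((B * sg) * hnorm h ^ 2) by ring.
    apply Rmult_le_compat_r; [apply pow2_ge_0|auto]. }
  destruct (Req_dec sg 0) as [->|Hn]; [apply Rmult_le_pos; auto; apply pow2_ge_0|].
  apply Rmult_le_reg_r with sg; [lra|]. nra.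
Qed.

Lemma analysis_l2 u B : Bes u B -> forall h, is_l2 (analysis u h) /\ n2 (analysis u h) <= B * hnorm h ^ 2.
Proof.
  intros HBB h. destruct (Ser_bounded (fun k => Cmod2 (analysis u h k)) (B * hnorm h ^ 2)) as [l [Hl Hle]].
  - intros; apply Cmod2_nonneg.
  - intros n; apply bessel_fin; auto.
  - split; [apply is_l2_Ser; exists l; auto|]. unfold n2; rewrite (series_sum_eq _ _ Hl); auto.
Qed.

Definition cfrom (c : nat -> Cx) (n : nat) : nat -> Cx := fun k => if (n <=? k)%nat then c k else Defs.C0.

Lemma hpsum_split (u : nat -> X) c n m : (n <= m)%nat ->
  hsub (hpsum (fun k => hscal (c k) (u k)) m) (hpsum (fun k => hscal (c k) (u k)) n)
  = hpsum (fun k => hscal (cfrom c n k) (u k)) m.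
Proof.
  intros H. induction H.
  - rewrite hsub_diag. symmetry.
    assert (forall m, (m <= n)%nat -> hpsum (fun k => hscal (cfrom c n k) (u k)) m = hz); [|apply H; lia].
    induction m; intros; simpl; auto. rewrite IHm by lia. unfold cfrom.
    replace (n <=? m)%nat with false by (symmetry; apply Nat.leb_gt; lia). rewrite hscal_0, hadd_0; auto.
  - simpl. rewrite <- IHle. unfold cfrom. replace (n <=? m)%nat with true by (symmetry; apply Nat.leb_le; lia).
    rewrite !hsub_scal. rewrite <- !hadd_assoc. f_equal. apply hadd_comm.
Qed.

Lemma rs_cfrom (c : nat -> Cx) n m : (n <= m)%nat ->
  rs (fun k => Cmod2 (cfrom c n k)) m = rs (fun k => Cmod2 (c k)) m - rs (fun k => Cmod2 (c k)) n.
Proof.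
  intros H. induction H.
  - assert (forall m, (m <= n)%nat -> rs (fun k => Cmod2 (cfrom c n k)) m = 0); [|rewrite H; lia||ring].
    induction m; intros; simpl; auto. rewrite IHm by lia. unfold cfrom.
    replace (n <=? m)%nat with false by (symmetry; apply Nat.leb_gt; lia). unfold Cmod2, Defs.C0; simpl; ring.
  - simpl. rewrite IHle. unfold cfrom. replace (n <=? m)%nat with true by (symmetry; apply Nat.leb_le; lia). ring.
Qed.

Lemma synth_has_sum u B (Hc : complete (H:=X)) : Bes u B -> forall c, is_l2 c ->
  has_sum (fun k => hscal (c k) (u k)) (synth u c).
Proof.
  intros HBB c Hl2. apply l2_ser in Hl2.
  assert (Ex : exists x, has_sum (fun k => hscal (c k) (u k)) x).
  { apply Hc. intros e He.
    destruct (Lim_cauchy _ _ Hl2 (e * e / (B + 1))) as [N HN].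
    { destruct HBB; apply Rdiv_lt_0_compat; nra. }
    exists N. intros n m Hn Hm.
    assert (Gen : forall n m, (N <= n)%nat -> (N <= m)%nat -> (n <= m)%nat ->
      hnorm (hsub (hpsum (fun k => hscal (c k) (u k)) m) (hpsum (fun k => hscal (c k) (u k)) n)) < e).
    { clear n m Hn Hm. intros n m Hn Hm Hnm. rewrite hpsum_split by auto.
      pose proof (synth_fin_bound u B HBB (cfrom c n) m) as Hb. rewrite rs_cfrom in Hb by auto.
      specialize (HN m n Hm Hn). destruct HBB as [HB _].
      pose proof (rs_mono (fun k => Cmod2 (c k)) n m (fun k => Cmod2_nonneg (c k)) Hnm).
      rewrite Rabs_right in HN by lra.
      set (nn := hnorm (hpsum (fun k : nat => hscal (cfrom c n k) (u k)) m)) in *.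
      assert (Hnn : 0 <= nn) by apply hnorm_nonneg.
      enough (nn ^ 2 < e * e) by nra.
      eapply Rle_lt_trans; [apply Hb|].
      apply Rle_lt_trans with (B * (e * e / (B + 1))); [apply Rmult_le_compat_l; lra|].
      apply Rlt_le_trans with ((B + 1) * (e * e / (B + 1))); [apply Rmult_lt_compat_r; [apply Rdiv_lt_0_compat; nra|lra]|].
      right; field; lra. }
    destruct (Nat.le_ge_cases n m).
    - rewrite hsub_sym_norm; apply Gen; auto.
    - apply Gen; auto. }
  unfold synth. apply (epsilon_spec (inhabits hz) (fun x => has_sum (fun k => hscal (c k) (u k)) x) Ex).
Qed.

Lemma synth_bound u B (Hc : complete (H:=X)) : Bes u B -> forall c, is_l2 c ->
  hnorm (synth u c) ^ 2 <= B * n2 c.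
Proof.
  intros HBB c Hl2. pose proof (synth_has_sum u B Hc HBB c Hl2) as Hs.
  apply has_sum_norm in Hs. pose proof (l2_ser _ Hl2) as Hser. destruct HBB as [HB HBes].
  assert (Hb : forall n, hnorm (hpsum (fun k => hscal (c k) (u k)) n) <= sqrt (B * n2 c)).
  { intros n. rewrite <- (sqrt_pow2 (hnorm _)) by apply hnorm_nonneg. apply sqrt_le_1_alt.
    eapply Rle_trans; [apply (synth_fin_bound u B (conj HB HBes))|].
    apply Rmult_le_compat_l; auto. apply Ser_partial_le; auto. intros; apply Cmod2_nonneg. }
  pose proof (Lim_le_const _ _ _ Hb Hs).
  pose proof (n2_nonneg c Hl2).
  rewrite <- (pow2_sqrt (B * n2 c)) by (apply Rmult_le_pos; auto).
  apply pow_incr; split; auto; apply hnorm_nonneg.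
Qed.

Lemma synth_cspan u B (Hc : complete (H:=X)) : Bes u B -> forall c, is_l2 c -> in_cspan u (synth u c).
Proof. intros; eapply has_sum_cspan; eapply synth_has_sum; eauto. Qed.

Lemma adjoint u B (Hc : complete (H:=X)) : Bes u B -> forall (z : nat -> Cx) h, is_l2 z ->
  l2inner z (analysis u h) = hinner (synth u z) h.
Proof.
  intros HBB z h Hz. pose proof (synth_has_sum u B Hc HBB z Hz) as Hs.
  destruct (analysis_l2 u B HBB h) as [Ha _].
  apply Cx_eq.
  - eapply Lim_unique; [apply (l2_re_ser _ _ Hz Ha)|].
    eapply Lim_ext; [|apply (has_sum_re _ _ h Hs)]. intros n. simpl. rewrite re_inner_hpsum.
    apply rs_ext. intros k. rewrite inner_scal_l. unfold analysis. rewrite (inner_conj h (u k)). auto.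
  - eapply Lim_unique; [apply (l2_im_ser _ _ Hz Ha)|].
    eapply Lim_ext; [|apply (has_sum_im _ _ h Hs)]. intros n. simpl. rewrite im_inner_hpsum.
    apply rs_ext. intros k. rewrite inner_scal_l. unfold analysis. rewrite (inner_conj h (u k)). auto.
Qed.

End HS5.


Section HS6.
Context {X : HSpace}.
Implicit Types h : X.

Lemma rs_zero n : rs (fun _ => 0) n = 0.
Proof. induction n; simpl; [auto|rewrite IHn; ring]. Qed.

Lemma orth_span (u : nat -> X) h : (forall j, hinner h (u j) = Defs.C0) -> forall w, in_span u w -> hinner h w = Defs.C0.
Proof.
  intros Hj w [n [a ->]]. rewrite inner_conj. apply Cx_eq.
  - simpl. rewrite re_inner_hpsum. rewrite (rs_ext _ (fun _ => 0)).
    + rewrite rs_zero; auto.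
    + intros k. rewrite inner_scal_l, inner_conj, Hj. unfold Defs.C0; simpl; ring.
  - simpl. rewrite im_inner_hpsum. rewrite (rs_ext _ (fun _ => 0)).
    + rewrite rs_zero; unfold Defs.C0; simpl; ring.
    + intros k. rewrite inner_scal_l, inner_conj, Hj. unfold Defs.C0; simpl; ring.
Qed.

Lemma small_zero r : (forall eps, 0 < eps -> Rabs r <= eps) -> r = 0.
Proof.
  intros H. destruct (Req_dec r 0) as [|Hn]; auto. exfalso.
  specialize (H (Rabs r / 2)). assert (0 < Rabs r) by (apply Rabs_pos_lt; auto). specialize (H ltac:(lra)). lra.
Qed.

Lemma orth_re (u : nat -> X) h : (forall j, hinner h (u j) = Defs.C0) -> forall w, in_cspan u w -> re (hinner h w) = 0.
Proof.
  intros Hj w Hw. apply small_zero. intros e He.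
  destruct (Hw (e / (hnorm h + 1))) as [y [Hy Hn]]. { apply Rdiv_lt_0_compat; [lra|pose proof (hnorm_nonneg h); lra]. }
  assert (E : re (hinner h w) = re (hinner h (hsub w y))).
  { rewrite inner_sub_r, (orth_span u h Hj y Hy). unfold mone, Defs.C0; simpl; ring. }
  rewrite E. eapply Rle_trans; [apply CS_abs|].
  pose proof (hnorm_nonneg h); pose proof (hnorm_nonneg (hsub w y)).
  apply Rle_trans with (hnorm h * (e / (hnorm h + 1))); [apply Rmult_le_compat_l; lra|].
  apply Rle_trans with ((hnorm h + 1) * (e / (hnorm h + 1))); [apply Rmult_le_compat_r; [apply Rlt_le, Rdiv_lt_0_compat|]; lra|].
  right; field; lra.
Qed.

Lemma orth_cspan (u : nat -> X) h : (forall j, hinner h (u j) = Defs.C0) -> forall w, in_cspan u w -> hinner h w = Defs.C0.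
Proof.
  intros Hj w Hw. apply Cx_eq; [apply orth_re with u; auto|].
  rewrite im_as_re. apply orth_re with u; auto. apply in_cspan_scal; auto.
Qed.

Lemma hadd_hsub (x y : X) : hadd y (hsub x y) = x.
Proof. unfold hsub. rewrite (hadd_comm y), <- hadd_assoc, (hadd_comm (hopp y)), hadd_opp, hadd_0; auto. Qed.

Variables (u : nat -> X) (B : R) (Hc : complete (H:=X)) (HBB : Bes u B) (T : l2op) (HT : is_sqrt_pinv (gram u) T).

Lemma proj_main f : exists v, is_orth_proj u f v /\ l2norm (T (analysis u f)) = hnorm v.
Proof.
  destruct HT as [P [[HPb [MP2 [MP3 [MP4 MP5]]]] [HTb [Tsa [Tpos Tsq]]]]].
  destruct HPb as [HPl2 _]. destruct HTb as [HTl2 _].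
  set (x := analysis u f). pose proof (analysis_l2 u B HBB f) as [Hx _]. fold x in Hx.
  set (y := P x). assert (Hy : is_l2 y) by (apply HPl2; auto).
  set (v := synth u y). set (h := hsub f v).
  assert (Hv : in_cspan u v) by (apply synth_cspan with B; auto).
  set (e := analysis u h). destruct (analysis_l2 u B HBB h) as [He _]. fold e in He.
  assert (HM : forall z, is_l2 z -> is_l2 (gram u z)) by (intros z _; apply (analysis_l2 u B HBB)).
  assert (Ee : forall j, e j = lin mone (gram u y) x j).
  { intros j. unfold e, lin, analysis, h, gram, x. rewrite inner_sub_l. fold v. unfold analysis, Cadd, Cmul, mone; apply Cx_eq; simpl; ring. }
  assert (Horth : forall z, is_l2 z -> l2inner e (gram u z) = Defs.C0).
  { intros z Hz. rewrite (l2inner_ext e (lin mone (gram u y) x) (gram u z) (gram u z)) by auto.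
    rewrite l2inner_lin1 by auto. unfold y. rewrite MP4 by auto.
    rewrite (l2inner_ext x x (gram u (P (gram u z))) (gram u z)) by (auto; apply MP2; auto).
    unfold mone, Defs.C0; cx. }
  assert (HUe : synth u e = hz).
  { pose proof (Horth e He) as H0. unfold gram in H0. rewrite (adjoint u B Hc HBB) in H0 by auto.
    apply hnorm_sq_zero. rewrite H0; auto. }
  assert (Hee : n2 e = 0).
  { rewrite <- l2inner_self_re. unfold e at 2. rewrite (adjoint u B Hc HBB) by auto. rewrite HUe, inner_0_l; auto. }
  assert (Hj : forall j, hinner h (u j) = Defs.C0) by (intros j; apply (n2_zero e He Hee j)).
  assert (Hproj : is_orth_proj u f v) by (split; auto; intros w Hw; apply orth_cspan with u; auto).
  exists v; split; auto.
  assert (HTx : is_l2 (T x)) by auto.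
  unfold l2norm. fold (n2 (T x)). rewrite <- l2inner_self_re.
  rewrite Tsa by auto. rewrite (l2inner_ext x x (T (T x)) (P x)) by (auto; apply Tsq; auto).
  rewrite (l2inner_conj (P x) x) by auto. fold y. change (re (Cconj (l2inner y x))) with (re (l2inner y x)).
  unfold x. rewrite (adjoint u B Hc HBB) by auto. fold v.
  assert (re (hinner v f) = re (hinner v v)).
  { pose proof (f_equal re (inner_sub_r f v v)) as E. fold h in E.
    rewrite inner_conj, (orth_cspan u h Hj v Hv) in E. unfold mone, Defs.C0 in E; simpl in E. lra. }
  rewrite H. unfold hnorm; auto.
Qed.

End HS6.


Section HS7.
Context {X : HSpace}.

Lemma pyth (u : nat -> X) f v : is_orth_proj u f v -> hnorm v <= hnorm f.
Proof.
  intros [Hv Ho]. unfold hnorm. apply sqrt_le_1_alt.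
  replace (hinner f f) with (hinner (hadd v (hsub f v)) (hadd v (hsub f v))) by (rewrite hadd_hsub; auto). rewrite normsq_add.
  rewrite (re_inner_sym (hsub f v) v), (Ho v Hv). pose proof (inner_pos (hsub f v)). unfold Defs.C0; simpl. lra.
Qed.

Lemma lower_cos (g u : nat -> X) cphi f v : cos_angle g u cphi -> 0 < cphi -> in_cspan g f -> is_orth_proj u f v ->
  cphi * hnorm f <= hnorm v.
Proof.
  intros [Hlb _] Hp Hf [Hv Ho]. destruct (Req_dec (hnorm f) 0) as [E|E].
  { rewrite E, Rmult_0_r; apply hnorm_nonneg. }
  pose proof (hnorm_nonneg f) as Hf0. set (t := / hnorm f).
  assert (Ht : 0 < t) by (unfold t; apply Rinv_0_lt_compat; lra).
  assert (H1 : cphi <= hnorm (hscal (rsc t) v)).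
  { apply Hlb. exists (hscal (rsc t) f), (hscal (rsc t) v). repeat split.
    - apply in_cspan_scal; auto.
    - rewrite hnorm_rsc, Rabs_right by lra. unfold t; field; lra.
    - apply in_cspan_scal; auto.
    - intros y Hy. rewrite hscal_sub, inner_scal_l, (Ho y Hy). unfold Defs.C0; apply Cx_eq; simpl; ring. }
  rewrite hnorm_rsc, Rabs_right in H1 by lra. unfold t in H1.
  apply Rmult_le_compat_r with (r := hnorm f) in H1; [|lra].
  replace (/ hnorm f * hnorm v * hnorm f) with (hnorm v) in H1 by (field; lra). lra.
Qed.

End HS7.


Section HS8.
Context {X : HSpace}.

Lemma has_sum_ext (f1 f2 : nat -> X) x : (forall k, f1 k = f2 k) -> has_sum f1 x -> has_sum f2 x.
Proof. intros E H e He; destruct (H e He) as [N HN]; exists N; intros n Hn; rewrite <- (hpsum_ext f1 f2 n E); auto. Qed.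

Lemma synth_lin (g : nat -> X) B (Hc : complete (H:=X)) : Bes g B -> forall a c d, is_l2 c -> is_l2 d ->
  synth g (lin a c d) = hadd (hscal a (synth g c)) (synth g d).
Proof.
  intros HB a c d Hc' Hd. eapply has_sum_unique.
  - apply (synth_has_sum g B Hc HB). apply l2_lin; auto.
  - eapply has_sum_ext; [|apply has_sum_lin; apply (synth_has_sum g B Hc HB); eauto].
    intros k. unfold lin. rewrite hscal_distr_s, hscal_assoc; auto.
Qed.

Lemma analysis_lin (g : nat -> X) a (w1 w2 : X) : analysis g (hadd (hscal a w1) w2) = lin a (analysis g w1) (analysis g w2).
Proof. apply functional_extensionality; intros k. unfold analysis, lin. rewrite inner_add_l, inner_scal_l; auto. Qed.

Lemma hsub_hadd (f a b : X) : hsub f (hadd a b) = hsub (hsub f a) b.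
Proof. unfold hsub. rewrite !hopp_scal, hscal_distr_v, hadd_assoc; auto. Qed.

Lemma hsub_hadd2 (w a wn : X) : hsub (hadd w a) wn = hadd (hsub w wn) a.
Proof. unfold hsub. rewrite <- !hadd_assoc, (hadd_comm a); auto. Qed.

Variables (g : nat -> X) (C D : R) (Hc : complete (H:=X)) (Hg : frame_seq g C D).

Definition Sop (w : X) : X := synth g (analysis g w).

Lemma HBg : Bes g D.
Proof. eapply frame_Bes; eauto. Qed.

Lemma HD : 0 < D.
Proof. destruct Hg as [_ [H _]]; auto. Qed.
Lemma HC : 0 < C.
Proof. destruct Hg as [H _]; auto. Qed.

Lemma an_l2 w : is_l2 (analysis g w).
Proof. apply (analysis_l2 g D HBg w). Qed.

Lemma Sop_lin a w1 w2 : Sop (hadd (hscal a w1) w2) = hadd (hscal a (Sop w1)) (Sop w2).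
Proof. unfold Sop. rewrite analysis_lin. apply (synth_lin g D Hc HBg); apply an_l2. Qed.

Lemma Sop_cspan w : in_cspan g (Sop w).
Proof. apply (synth_cspan g D Hc HBg), an_l2. Qed.

Lemma Sop_z : Sop hz = hz.
Proof.
  pose proof (Sop_lin Defs.C1 hz hz) as E. rewrite !hscal_1, hadd_0 in E.
  apply (hadd_cancel (Sop hz)). rewrite hadd_0. symmetry; exact E.
Qed.

Lemma Sop_sub w1 w2 : Sop (hsub w1 w2) = hsub (Sop w1) (Sop w2).
Proof. rewrite !hsub_scal, hadd_comm, Sop_lin, hadd_comm; auto. Qed.

Lemma Sop_re w : re (hinner (Sop w) w) = n2 (analysis g w).
Proof. unfold Sop. rewrite <- (adjoint g D Hc HBg) by apply an_l2. apply l2inner_self_re. Qed.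

Lemma Sop_sq w : hnorm (Sop w) ^ 2 <= D * n2 (analysis g w).
Proof. apply (synth_bound g D Hc HBg), an_l2. Qed.

Lemma an_n2_le w : n2 (analysis g w) <= D * hnorm w ^ 2.
Proof. apply (analysis_l2 g D HBg w). Qed.

Lemma an_n2_ge w : in_cspan g w -> C * hnorm w ^ 2 <= n2 (analysis g w).
Proof.
  intros Hw. destruct Hg as [_ [_ H]]. destruct (H w Hw) as [s [Hs [Hle _]]].
  unfold n2, analysis. rewrite (series_sum_eq _ s); auto. apply infsum_Ser; auto.
Qed.

Lemma Sop_norm w : hnorm (Sop w) <= D * hnorm w.
Proof.
  pose proof (Sop_sq w). pose proof (an_n2_le w). pose proof HD.
  assert (hnorm (Sop w) ^ 2 <= (D * hnorm w) ^ 2) by (rewrite Rpow_mult_distr; nra).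
  pose proof (hnorm_nonneg w). pose proof (hnorm_nonneg (Sop w)).
  apply Rsqr_incr_0_var; [unfold Rsqr; nra|nra].
Qed.

Definition lam := / D.
Definition qq := Rmax (1 - C / D) 0.

Lemma re_inner_rsc_r (x y : X) t : re (hinner x (hscal (rsc t) y)) = t * re (hinner x y).
Proof. rewrite inner_scal_r. unfold rsc; simpl. ring. Qed.
Lemma Cmod2_rsc t : Cmod2 (rsc t) = t * t.
Proof. unfold Cmod2, rsc; simpl; ring. Qed.

Lemma contr w : in_cspan g w -> hnorm (hsub w (hscal (rsc lam) (Sop w))) ^ 2 <= qq * hnorm w ^ 2.
Proof.
  intros Hw. rewrite hnorm_sq, normsq_sub, re_inner_rsc_r, normsq_scal, Cmod2_rsc.
  rewrite (re_inner_sym (Sop w) w), Sop_re.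
  pose proof (Sop_sq w) as H1. pose proof (an_n2_ge w Hw) as H2. pose proof HD. pose proof HC.
  rewrite hnorm_sq in *. set (a := n2 (analysis g w)) in *. set (nw := re (hinner w w)) in *.
  set (ns := re (hinner (Sop w) (Sop w))) in *.
  unfold lam. apply Rle_trans with (nw - a / D).
  { assert (/ D * / D * ns <= a / D). { apply Rle_trans with (/ D * / D * (D * a)); [apply Rmult_le_compat_l; [|auto]; apply Rlt_le, Rmult_lt_0_compat; apply Rinv_0_lt_compat; lra|right; field; lra]. }
    assert (2 * (/ D * a) = 2 * (a / D)) by (field; lra). lra. }
  unfold qq. apply Rle_trans with ((1 - C / D) * nw).
  { assert (C / D * nw <= a / D). { replace (C / D * nw) with ((C * nw) / D) by (field; lra). unfold Rdiv. apply Rmult_le_compat_r; [apply Rlt_le, Rinv_0_lt_compat; lra|lra]. }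
    lra. }
  apply Rmult_le_compat_r; [apply inner_pos|apply Rmax_l].
Qed.

Fixpoint it (f : X) (n : nat) : X * X :=
  match n with
  | O => (hz, f)
  | S m => let p := it f m in
      (hadd (fst p) (hscal (rsc lam) (snd p)), hsub (snd p) (hscal (rsc lam) (Sop (snd p))))
  end.

Lemma it_inv f : in_cspan g f -> forall n,
  snd (it f n) = hsub f (Sop (fst (it f n))) /\ in_cspan g (fst (it f n)) /\ in_cspan g (snd (it f n)).
Proof.
  intros Hf n. induction n as [|n [E [Hw He]]]; simpl.
  - rewrite Sop_z, hsub_0. repeat split; auto. apply in_cspan_z.
  - repeat split.
    + rewrite hadd_comm, Sop_lin, hadd_comm, hsub_hadd, <- E; auto.
    + apply in_cspan_add; auto. apply in_cspan_scal; auto.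
    + apply in_cspan_sub; auto. apply in_cspan_scal, Sop_cspan.
Qed.

Definition rho := sqrt qq.

Lemma qq_bounds : 0 <= qq < 1.
Proof.
  pose proof HC; pose proof HD. unfold qq. split; [apply Rmax_r|].
  apply Rmax_lub_lt; [|lra]. assert (0 < C / D) by (apply Rdiv_lt_0_compat; lra). lra.
Qed.

Lemma rho_bounds : 0 <= rho < 1.
Proof.
  pose proof qq_bounds. unfold rho. split; [apply sqrt_pos|]. rewrite <- sqrt_1. apply sqrt_lt_1_alt; lra.
Qed.

Lemma it_norm f : in_cspan g f -> forall n, hnorm (snd (it f n)) <= rho ^ n * hnorm f.
Proof.
  intros Hf n. pose proof rho_bounds as Hr. induction n; simpl.
  - lra.
  - destruct (it_inv f Hf n) as [_ [_ He]]. pose proof (contr _ He) as Hc2.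
    set (e := snd (it f n)) in *.
    assert (hnorm (hsub e (hscal (rsc lam) (Sop e))) <= rho * hnorm e).
    { apply Rsqr_incr_0_var; [|apply Rmult_le_pos; [lra|apply hnorm_nonneg]].
      unfold Rsqr. rewrite <- !Rsqr_pow2 in Hc2. unfold Rsqr in Hc2.
      replace (rho * hnorm e * (rho * hnorm e)) with ((rho * rho) * (hnorm e * hnorm e)) by ring.
      unfold rho; rewrite sqrt_sqrt by (pose proof qq_bounds; lra). auto. }
    apply Rle_trans with (rho * hnorm e); auto. rewrite Rmult_assoc. apply Rmult_le_compat_l; lra.
Qed.

Lemma it_cauchy f : in_cspan g f -> forall n m, (n <= m)%nat ->
  hnorm (hsub (fst (it f m)) (fst (it f n))) <= lam * hnorm f * (rho ^ n - rho ^ m) / (1 - rho).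
Proof.
  intros Hf n m Hnm. pose proof rho_bounds as Hr. pose proof HD as HD'.
  assert (Hl : 0 < lam) by (unfold lam; apply Rinv_0_lt_compat; lra).
  pose proof (hnorm_nonneg f).
  induction Hnm.
  - rewrite hsub_diag, hnorm_z. right; field; lra.
  - simpl. rewrite hsub_hadd2. eapply Rle_trans; [apply hnorm_triang|].
    rewrite hnorm_rsc, Rabs_right by lra. pose proof (it_norm f Hf m).
    apply Rle_trans with (lam * hnorm f * (rho ^ n - rho ^ m) / (1 - rho) + lam * (rho ^ m * hnorm f)).
    { apply Rplus_le_compat; auto. apply Rmult_le_compat_l; lra. }
    right; field; lra.
Qed.

Lemma S_surj f : in_cspan g f -> exists w, in_cspan g w /\ Sop w = f.
Proof.
  intros Hf. pose proof rho_bounds as Hr. pose proof HD as HD'.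
  assert (Hl : 0 < lam) by (unfold lam; apply Rinv_0_lt_compat; lra).
  pose proof (hnorm_nonneg f) as Hf0.
  set (K := lam * (hnorm f + 1) / (1 - rho)).
  assert (HK : 0 < K) by (unfold K; apply Rdiv_lt_0_compat; [apply Rmult_lt_0_compat|]; lra).
  assert (Hpow : forall eps, 0 < eps -> exists N, forall n, (N <= n)%nat -> rho ^ n < eps).
  { intros e He. destruct (pow_lt_1_zero rho ltac:(rewrite Rabs_right; lra) e He) as [N HN].
    exists N; intros n Hn. specialize (HN n Hn). rewrite Rabs_right in HN; auto.
    apply Rle_ge, pow_le; lra. }
  assert (Hbd : forall n m, (n <= m)%nat -> hnorm (hsub (fst (it f m)) (fst (it f n))) <= K * rho ^ n).
  { intros n m Hnm. eapply Rle_trans; [apply it_cauchy; auto|]. unfold K.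
    pose proof (pow_le rho m ltac:(lra)). pose proof (pow_le rho n ltac:(lra)).
    unfold Rdiv. rewrite !Rmult_assoc. apply Rmult_le_compat_l; [lra|].
    rewrite <- !Rmult_assoc, !(Rmult_comm _ (/ (1 - rho))), !Rmult_assoc.
    apply Rmult_le_compat_l; [apply Rlt_le, Rinv_0_lt_compat; lra|]. nra. }
  destruct (Hc (fun n => fst (it f n))) as [w Hw].
  { intros e He. destruct (Hpow (e / K)) as [N HN]. { apply Rdiv_lt_0_compat; lra. }
    exists N. intros n m Hn Hm.
    assert (forall n m, (N <= n)%nat -> (n <= m)%nat -> hnorm (hsub (fst (it f m)) (fst (it f n))) < e).
    { intros a b Ha Hab. eapply Rle_lt_trans; [apply Hbd; auto|].
      specialize (HN a Ha). apply Rlt_le_trans with (K * (e / K)); [apply Rmult_lt_compat_l; auto|right; field; lra]. }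
    destruct (Nat.le_ge_cases n m).
    - rewrite hsub_sym_norm; auto.
    - auto. }
  exists w. split.
  - apply in_cspan_closed. intros e He. destruct (Hw e He) as [N HN]. exists (fst (it f N)). split.
    + apply (it_inv f Hf N).
    + rewrite hsub_sym_norm; apply HN; lia.
  - symmetry. apply hsub_eq, hnorm_zero. apply small_zero. intros e He.
    rewrite Rabs_right by (apply Rle_ge, hnorm_nonneg).
    destruct (Hw (e / 2 / (D + 1))) as [N1 H1]. { apply Rdiv_lt_0_compat; lra. }
    destruct (Hpow (e / 2 / (hnorm f + 1))) as [N2 H2]. { apply Rdiv_lt_0_compat; lra. }
    set (n := max N1 N2). specialize (H1 n ltac:(unfold n; lia)). specialize (H2 n ltac:(unfold n; lia)).
    destruct (it_inv f Hf n) as [E _]. pose proof (it_norm f Hf n) as Hn.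
    rewrite E in Hn.
    eapply Rle_trans; [apply (hnorm_sub_triang f (Sop (fst (it f n))) (Sop w))|].
    rewrite <- Sop_sub. pose proof (Sop_norm (hsub (fst (it f n)) w)).
    pose proof (hnorm_nonneg (hsub (fst (it f n)) w)).
    assert (rho ^ n * hnorm f <= e / 2).
    { apply Rle_trans with (e / 2 / (hnorm f + 1) * (hnorm f + 1)); [|right; field; lra].
      pose proof (pow_le rho n ltac:(lra)). apply Rmult_le_compat; lra. }
    assert (D * hnorm (hsub (fst (it f n)) w) <= e / 2).
    { apply Rle_trans with ((D + 1) * (e / 2 / (D + 1))); [|right; field; lra].
      apply Rmult_le_compat; lra. }
    lra.
Qed.
End HS8.


Lemma lower_synth (X : HSpace) (g : nat -> X) C D (Hc : complete (H:=X)) (Hg : frame_seq g C D) c :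
  is_l2 c -> (forall d, is_l2 d -> synth g d = hz -> l2inner c d = Defs.C0) ->
  sqrt C * l2norm c <= hnorm (synth g c).
Proof.
  intros Hl Horth. pose proof (frame_Bes _ _ _ Hg) as HB.
  pose proof (HC g C D Hg) as HC'. 
  set (f := synth g c). assert (Hf : in_cspan g f) by (apply (synth_cspan g D Hc HB); auto).
  destruct (S_surj g C D Hc Hg f Hf) as [w [Hw HSw]].
  set (d0 := analysis g w). destruct (analysis_l2 g D HB w) as [Hd0 _]. fold d0 in Hd0.
  set (df := lin mone d0 c). assert (Hdf : is_l2 df) by (apply l2_lin; auto).
  assert (Hsd : synth g df = hz).
  { unfold df. rewrite (synth_lin g D Hc HB) by auto. unfold Sop in HSw. fold d0 in HSw. rewrite HSw.
    fold f. rewrite <- hopp_scal, hadd_comm, hadd_opp; auto. }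
  pose proof (Horth df Hdf Hsd) as H0.
  assert (E1 : n2 d0 = n2 df + n2 c).
  { rewrite (n2_ext d0 (lin mone df c)).
    - rewrite n2_diff by auto. rewrite (l2inner_conj c df), H0 by auto. unfold Defs.C0; simpl. ring.
    - intros k. unfold df, lin, mone. cx. }
  pose proof (n2_nonneg df Hdf). pose proof (n2_nonneg c Hl).
  assert (E2 : n2 d0 <= hnorm f * hnorm w).
  { unfold d0. rewrite <- (Sop_re g C D Hc Hg), HSw. apply CS_re. }
  pose proof (an_n2_ge g C D Hg w Hw) as E3. fold d0 in E3.
  pose proof (hnorm_nonneg f); pose proof (hnorm_nonneg w).
  set (a := n2 d0) in *. set (nf := hnorm f) in *. set (nw := hnorm w) in *.
  assert (Ca : C * a <= nf * nf).
  { destruct (Req_dec a 0) as [Ea|Ea]; [rewrite Ea; nra|].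
    assert (a * a <= nf * nf * (nw * nw)) by (apply Rle_trans with ((nf * nw) * (nf * nw)); [apply Rmult_le_compat; lra|right; ring]).
    assert (C * (a * a) <= nf * nf * a).
    { apply Rle_trans with (C * (nf * nf * (nw * nw))); [apply Rmult_le_compat_l; lra|].
      replace (C * (nf * nf * (nw * nw))) with (nf * nf * (C * nw ^ 2)) by ring.
      apply Rmult_le_compat_l; [nra|lra]. }
    apply Rmult_le_reg_r with a; [lra|nra]. }
  unfold l2norm. fold (n2 c). rewrite <- sqrt_mult by lra.
  rewrite <- (sqrt_pow2 nf) by auto. apply sqrt_le_1_alt. nra.
Qed.

Lemma n2_zero_seq : n2 zero_seq = 0.
Proof.
  apply series_sum_eq. eapply Ser_ext with (fun _ => 0).
  - intros; unfold zero_seq, Cmod2, Defs.C0; simpl; ring.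
  - eapply Lim_ext; [|apply Lim_const]. intros n; simpl. symmetry; apply rs_zero.
Qed.

Theorem lemma4p9 (X : HSpace) (Hcomp : @complete X) (Hsep : @separable X)
  (u g : nat -> X) (A B C D : R)
  (Hu : frame_seq u A B) (Hg : frame_seq g C D)
  (cphi : R) (Hcos : cos_angle g u cphi) (Hpos : 0 < cphi)
  (T : l2op) (HT : is_sqrt_pinv (gram u) T) :
  (forall c, is_l2 c ->
     (synth g c = hz <-> seq_eq (T (analysis u (synth g c))) zero_seq)) /\
  (forall c, is_l2 c ->
     (forall d, is_l2 d -> synth g d = hz -> l2inner c d = C0) ->
     sqrt C * cphi * l2norm c <= l2norm (T (analysis u (synth g c))) /\
     l2norm (T (analysis u (synth g c))) <= sqrt D * l2norm c).
Proof.
  pose proof (frame_Bes _ _ _ Hu) as HBu. pose proof (frame_Bes _ _ _ Hg) as HBg.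
  assert (Key : forall c, is_l2 c -> cphi * hnorm (synth g c) <= l2norm (T (analysis u (synth g c))) /\
                 l2norm (T (analysis u (synth g c))) <= hnorm (synth g c)).
  { intros c Hl. destruct (proj_main u B Hcomp HBu T HT (synth g c)) as [v [Hp Hn]].
    rewrite Hn. split.
    - eapply lower_cos; eauto. apply (synth_cspan g D Hcomp HBg); auto.
    - eapply pyth; eauto. }
  split.
  - intros c Hl. split.
    + intros Hz. rewrite Hz.
      replace (analysis u hz) with zero_seq by (apply functional_extensionality; intros; unfold analysis; rewrite inner_0_l; auto).
      destruct HT as [P [_ [[_ [Hlin _]] _]]].
      specialize (Hlin Defs.C1 zero_seq zero_seq).
      replace (fun n => Cadd (Cmul Defs.C1 (zero_seq n)) (zero_seq n)) with zero_seq in Hlin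
        by (apply functional_extensionality; intros; unfold zero_seq, Defs.C0, Defs.C1; cx).
      assert (Hz0 : is_l2 zero_seq).
      { exists 0; apply infsum_Ser; eapply Ser_ext with (fun _ => 0);
        [intros; unfold zero_seq, Cmod2, Defs.C0; simpl; ring|eapply Lim_ext; [|apply Lim_const]; intros; simpl; symmetry; apply rs_zero]. }
      specialize (Hlin Hz0 Hz0).
      intros n. specialize (Hlin n). unfold zero_seq in *. 
      destruct (T (fun _ => Defs.C0) n) as [p q]. unfold Defs.C1, Defs.C0 in *.
      injection Hlin. intros. apply Cx_eq; simpl; lra.
    + intros Hs. destruct (Key c Hl) as [K1 _].
      replace (T (analysis u (synth g c))) with zero_seq in K1 by (apply functional_extensionality; intros; symmetry; auto).
      unfold l2norm in K1. fold (n2 zero_seq) in K1. rewrite n2_zero_seq, sqrt_0 in K1.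
      apply hnorm_zero. pose proof (hnorm_nonneg (synth g c)). nra.
  - intros c Hl Horth. destruct (Key c Hl) as [K1 K2].
    pose proof (lower_synth X g C D Hcomp Hg c Hl Horth) as L. split.
    + rewrite (Rmult_comm (sqrt C) cphi), Rmult_assoc. eapply Rle_trans; [|exact K1].
      apply Rmult_le_compat_l; lra.
    + eapply Rle_trans; [exact K2|].
      pose proof (synth_bound g D Hcomp HBg c Hl). destruct HBg as [HD0 _].
      rewrite <- (sqrt_pow2 (hnorm (synth g c))) by apply hnorm_nonneg.
      unfold l2norm. fold (n2 c). rewrite <- sqrt_mult by (auto; apply n2_nonneg; auto).
      apply sqrt_le_1_alt; auto.
Qed.
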